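(* In the natural Hopf algebra $\mathcal N_{E^\bullet}=\mathbb K[t_2,t_3,\dots]$ (with $t_1=1$), the antipode satisfies, for every $n\ge2$, $$nS(t_n)=\sum_{k=1}^{n-1}(-1)^k(n+k-1)_k\,B_{n-1,k}(t_2,t_3,\dots)=\Big[\tfrac{x^{n-1}}{(n-1)!}\Big]\Big(1+\sum_{j\ge1}t_{j+1}\tfrac{x^j}{j!}\Big)^{-n},$$ where $(m)_k=m(m-1)\cdots(m-k+1)$. Equivalently, $nS(t_n)=\big[\tfrac{x^{n-1}}{(n-1)!}\big]\big(E^{\bullet I}(x)/x\big)^{-n}$, with $E^{\bullet I}(x)=x+\sum_{n\ge2}nt_n\frac{x^n}{n!}$.
   Context: $E^\bullet$ is the species of pointed sets: $E^\bullet[U]=\{(U,v):v\in U\}$ for $U\ne\emptyset$. It is a set operad with product $\eta(\{(B,v_B)\}_{B\in\pi},(\pi,B_0))=(U,v_{B_0})$, where $B_0\in\pi$ is the distinguished block. Types are identified with the cardinality $n$, with generator $t_n$ and $t_1=1$. The coproduct of the natural Hopf algebra is given by $n\Delta(t_n)=\sum_{k=1}^nB_{n,k}(0,2t_2,3t_3,\dots)\otimes kt_k$, and $S$ is its antipode. $B_{n,k}(x_1,x_2,\dots)=\sum_{\pi\in\Pi[n],|\pi|=k}\prod_{B\in\pi}x_{|B|}$ is the partial Bell polynomial, and $B_{n-1,k}(t_2,t_3,\dots)$ means $B_{n-1,k}(y_1,y_2,\dots)$ with $y_j=t_{j+1}$. $[x^m/m!]f$ denotes $m!$ times the coefficient of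 $x^m$ in $f$. *)

(* Defs.v *)
From HB Require Import structures.
From mathcomp Require Import all_boot all_order all_algebra.
Set Implicit Arguments. Unset Strict Implicit. Unset Printing Implicit Defensive.
Import Order.TTheory GRing.Theory.
Local Open Scope ring_scope.

(* Partial Bell polynomial B_{n,k}(x_1,x_2,...) evaluated in a commutative
   ring: sum over set partitions pi of {0..n-1} with k blocks of
   prod_{B in pi} x_{|B|}. *)
Definition bell (R : comPzRingType) (n k : nat) (x : nat -> R) : R :=
  \sum_(P : {set {set 'I_n}} | partition P [set: 'I_n] && (#|P| == k))
     \prod_(B in P) x #|B|.

(* Formal power series over R, represented by their coefficient sequences. *)
Definition ps_mul (R : comPzRingType) (f g : nat -> R) : nat -> R :=
  fun m => \sum_(i < m.+1) f i * g (m - i)%N.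

Definition ps_one (R : comPzRingType) : nat -> R := fun m => (m == 0%N)%:R.

Fixpoint ps_pow (R : comPzRingType) (f : nat -> R) (n : nat) : nat -> R :=
  match n with
  | 0 => @ps_one R
  | n'.+1 => ps_mul f (ps_pow f n')
  end.

(* Multiplicative inverse of a power series f with constant term f 0 = 1:
   g 0 = 1, g m = - sum_{i=1}^m f i * g (m - i). (Only used on series with
   constant coefficient 1.) *)
Fixpoint ps_inv_seq (R : comPzRingType) (f : nat -> R) (m : nat) : seq R :=
  match m with
  | 0 => [:: 1]
  | m'.+1 => let s := ps_inv_seq f m' in
      rcons s (- \sum_(1 <= i < m'.+2) f i * nth 0 s (m'.+1 - i)%N)
  end.

Definition ps_inv (R : comPzRingType) (f : nat -> R) : nat -> R :=
  fun m => nth 0 (ps_inv_seq f m) m.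

(* [x^m / m!] f  :=  m! * (coefficient of x^m in f) *)
Definition egf_coef (R : comPzRingType) (m : nat) (f : nat -> R) : R :=
  (m`!)%:R * f m.

(* Main.v *)
Require Import Defs.
From HB Require Import structures.
From mathcomp Require Import all_boot all_order all_algebra.
From mathcomp Require Import ring zify.
Import Order.TTheory GRing.Theory.
Local Open Scope ring_scope.

Set Implicit Arguments. Unset Strict Implicit. Unset Printing Implicit Defensive.

Definition eqN (R : comNzRingType) (N : nat) (p q : {poly R}) :=
  forall i, (i < N)%N -> p`_i = q`_i.

Lemma eqN_refl (R : comNzRingType) N (p : {poly R}) : eqN N p p.
Proof. by []. Qed.
Arguments eqN_refl {R} N p.
Lemma eqN_sym (R : comNzRingType) N (p q : {poly R}) : eqN N p q -> eqN N q p.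
Proof. by move=> h i hi; rewrite h. Qed.
Lemma eqN_trans (R : comNzRingType) N (p q r : {poly R}) :
  eqN N p q -> eqN N q r -> eqN N p r.
Proof. by move=> h1 h2 i hi; rewrite h1 // h2. Qed.
Lemma eqN_le (R : comNzRingType) M N (p q : {poly R}) :
  (M <= N)%N -> eqN N p q -> eqN M p q.
Proof. by move=> hMN h i hi; apply: h; apply: leq_trans hMN. Qed.
Lemma eqN_add (R : comNzRingType) N (p p' q q' : {poly R}) :
  eqN N p p' -> eqN N q q' -> eqN N (p + q) (p' + q').
Proof. by move=> h1 h2 i hi; rewrite !coefD h1 ?h2. Qed.
Lemma eqN_opp (R : comNzRingType) N (p p' : {poly R}) :
  eqN N p p' -> eqN N (- p) (- p').
Proof. by move=> h1 i hi; rewrite !coefN h1. Qed.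
Lemma eqN_scale (R : comNzRingType) N (c : R) (p p' : {poly R}) :
  eqN N p p' -> eqN N (c *: p) (c *: p').
Proof. by move=> h1 i hi; rewrite !coefZ h1. Qed.
Lemma eqN_mul (R : comNzRingType) N (p p' q q' : {poly R}) :
  eqN N p p' -> eqN N q q' -> eqN N (p * q) (p' * q').
Proof.
move=> h1 h2 i hi; rewrite !coefM; apply: eq_bigr => j _.
have hj : (j < N)%N by apply: leq_ltn_trans hi; rewrite -ltnS.
have hij : (i - j < N)%N by apply: leq_ltn_trans hi; apply: leq_subr.
by rewrite h1 // h2.
Qed.
Lemma eqN_exp (R : comNzRingType) N (p p' : {poly R}) n :
  eqN N p p' -> eqN N (p ^+ n) (p' ^+ n).
Proof.
move=> h; elim: n => [|n IH]; first exact: eqN_refl.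
by rewrite !exprS; apply: eqN_mul.
Qed.
Lemma eqN_sum (R : comNzRingType) N (I : finType) (F G : I -> {poly R}) :
  (forall i, eqN N (F i) (G i)) -> eqN N (\sum_i F i) (\sum_i G i).
Proof. by move=> h i hi; rewrite !coef_sum; apply: eq_bigr => j _; rewrite h. Qed.
Lemma eqN_deriv (R : comNzRingType) N (p q : {poly R}) :
  eqN N.+1 p q -> eqN N p^`() q^`().
Proof. by move=> h i hi; rewrite !coef_deriv h. Qed.
Lemma eqN_X (R : comNzRingType) N (p q : {poly R}) :
  eqN N.+1 ('X * p) ('X * q) -> eqN N p q.
Proof. by move=> h i hi; have := h i.+1 hi; rewrite !coefXM. Qed.
Lemma eqN_Xr (R : comNzRingType) N (p q : {poly R}) :
  eqN N p q -> eqN N.+1 ('X * p) ('X * q).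
Proof. by move=> h [|i] hi; rewrite !coefXM //= h. Qed.

Lemma X_factor (R : comNzRingType) (q : {poly R}) :
  q`_0 = 0 -> q = 'X * drop_poly 1 q.
Proof.
move=> h0; rewrite -{1}(poly_take_drop 1 q) mulrC expr1.
suff -> : take_poly 1 q = 0 by rewrite add0r.
apply/polyP => i; rewrite coef_take_poly coef0; case: i => [|i] //=.
Qed.

Lemma coef_exp_low (R : comNzRingType) (q : {poly R}) n i :
  q`_0 = 0 -> (i < n)%N -> (q ^+ n)`_i = 0.
Proof.
move=> h0 hi; rewrite (X_factor h0) exprMn coefXnM hi //.
Qed.

Lemma comp_poly_big (R : comNzRingType) (p q : {poly R}) M :
  (size p <= M)%N -> p \Po q = \sum_(i < M) p`_i *: q ^+ i.
Proof.
move=> hs; rewrite comp_polyE (big_ord_widen M (fun i => p`_i *: q ^+ i) hs).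
rewrite [RHS](bigID (fun i : 'I_M => (i < size p)%N)) /= [X in _ = _ + X]big1 ?addr0 //.
by move=> i; rewrite -leqNgt => /(nth_default 0) ->; rewrite scale0r.
Qed.

Lemma eqN_comp (R : comNzRingType) N (p p' q : {poly R}) :
  q`_0 = 0 -> eqN N p p' -> eqN N (p \Po q) (p' \Po q).
Proof.
move=> h0 h i hi; apply/eqP; rewrite -subr_eq0 -coefB -comp_polyB.
set d := p - p'.
have hd : forall j, (j < N)%N -> d`_j = 0 by move=> j hj; rewrite coefB h // subrr.
rewrite coefE; apply/eqP; apply: big1 => j _.
case: (ltnP j N) => hj; first by rewrite hd // mul0r.
by rewrite coef_exp_low ?mulr0 //; apply: leq_trans hi hj.
Qed.

Lemma comp_polyXn (R : comNzRingType) (p q : {poly R}) n :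
  (p ^+ n) \Po q = (p \Po q) ^+ n.
Proof.
elim: n => [|n IH]; first by rewrite !expr0 comp_polyC.
by rewrite !exprS comp_polyM IH.
Qed.

Lemma natK_cancel (K : fieldType) (charK0 : [pchar K] =i pred0)
  (A : comAlgType K) (a b : A) n :
  (0 < n)%N -> a *+ n = b *+ n -> a = b.
Proof.
move=> hn h.
have hK : (n%:R : K) != 0 by rewrite ((pcharf0P K).1 charK0 n) -lt0n.
have E : forall c : A, c = (n%:R : K)^-1 *: (c *+ n).
  by move=> c; rewrite -scaler_nat scalerA mulVf // scale1r.
by rewrite (E a) (E b) h.
Qed.

Lemma residue (K : fieldType) (charK0 : [pchar K] =i pred0)
  (A : comAlgType K) M (R Kp : {poly A}) e :
  eqN M (R * Kp) 1 -> (0 < e)%N -> (e.-1 < M)%N ->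
  (R ^+ e * ('X * Kp)^`())`_e.-1 = (e == 1%N)%:R.
Proof.
move=> hRK he heM.
rewrite derivM derivX mul1r mulrDr coefD.
have h1 : (R ^+ e * Kp)`_e.-1 = (R ^+ e.-1)`_e.-1.
  rewrite -(prednK he) exprS /= [R * _]mulrC -mulrA.
  have := eqN_mul (eqN_refl M (R ^+ e.-1)) hRK; rewrite mulr1 => h.
  by rewrite h // prednK.
rewrite h1; case: e he heM {h1} => [//|[|f]] _ /= hfM.
  by rewrite expr0 coef1 mulrCA coefXM /= addr0.
rewrite mulrCA coefXM /=.
case: M hRK hfM => [//|M'] hRK hfM.
have hd : eqN M' (R^`() * Kp + R * Kp^`()) 0.
  have := eqN_deriv hRK; rewrite derivM derivC => h i hi; by rewrite h.
have hR' : eqN M' R^`() (- (R ^+ 2 * Kp^`())).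
  have := eqN_mul (eqN_refl M' R) hd; rewrite mulr0 mulrDr => h.
  have hRK' := eqN_le (leqnSn M') hRK.
  have := eqN_mul (eqN_refl M' R^`()) hRK'; rewrite mulr1 => h2.
  move=> i hi; apply/eqP; rewrite -subr_eq0 coefN opprK; apply/eqP.
  have := h i hi; rewrite coef0 => E.
  transitivity ((R * (R^`() * Kp) + R * (R * Kp^`()))`_i); last exact: E.
  by rewrite -(h2 i hi) -coefD mulrCA expr2 -mulrA.
have hD : eqN M' (R ^+ f.+1)^`() (- (R ^+ f.+2 * Kp^`()) *+ f.+1).
  rewrite deriv_exp /= => i hi; rewrite !coefMn; congr (_ *+ _).
  have hh := eqN_mul hR' (eqN_refl M' (R ^+ f)); rewrite (hh i hi).
  by rewrite mulNr -mulrA [Kp^`() * _]mulrC mulrA -exprD.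
have := hD f hfM; rewrite coef_deriv coefMn coefN.
move/(natK_cancel charK0 (ltn0Sn f)) => ->.
by rewrite addNr.
Qed.

Lemma sum_pick (R : comNzRingType) S (a : nat -> R) k :
  (k < S)%N -> \sum_(i < S) a i * ((i : nat) == k)%:R = a k.
Proof.
move=> hk; rewrite (bigD1 (Ordinal hk)) //= eqxx mulr1 big1 ?addr0 //.
move=> i hi; have -> : (nat_of_ord i == k) = false.
  by apply/negbTE; apply: contra hi => /eqP h; apply/eqP/val_inj.
by rewrite mulr0.
Qed.

Lemma lagrange_inv (K : fieldType) (charK0 : [pchar K] =i pred0)
  (A : comAlgType K) N (G P Q : {poly A}) n :
  G`_0 = 0 -> (0 < n)%N -> (n < N)%N ->
  eqN N (G * (P \Po G)) 'X -> eqN N (Q * P ^+ n) 1 ->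
  G`_n *+ n = Q`_n.-1.
Proof.
move=> h0 hn hnN hGP hQ.
case: N hnN hGP hQ => [//|N'] hnN hGP hQ.
set Kp := drop_poly 1 G; have hG : G = 'X * Kp := X_factor h0.
set R := P \Po G.
have hKR : eqN N' (R * Kp) 1.
  apply: eqN_X; rewrite mulr1 mulrCA -hG [R * G]mulrC; exact: hGP.
have c1 : (1 : {poly A}) \Po G = 1 by rewrite -polyC1 comp_polyC.
have hA : eqN N'.+1 ((Q \Po G) * R ^+ n) 1.
  have := eqN_comp h0 hQ; rewrite comp_polyM comp_polyXn c1; exact.
have hterm : forall i, (G ^+ i * R ^+ n * G^`())`_n.-1 = (i == n.-1)%:R.
  move=> i; rewrite {1}hG exprMn -!mulrA coefXnM.
  case: ltnP => hi.
    by have -> : (i == n.-1) = false by apply/negbTE; rewrite neq_ltn hi orbT.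
  have hin : (i <= n)%N by apply: leq_trans hi (leq_pred n).
  have -> : Kp ^+ i * (R ^+ n * G^`()) = (R * Kp) ^+ i * (R ^+ (n - i) * G^`()).
    by rewrite exprMn -(subnK hin) exprD subnK //; ring.
  have hRKi : eqN N' ((R * Kp) ^+ i) 1 by have := eqN_exp i hKR; rewrite expr1n.
  have hh := eqN_mul hRKi (eqN_refl N' (R ^+ (n - i) * G^`())).
  rewrite (hh _ _); last by move: hnN hn hi; clear; lia.
  rewrite mul1r.
  have he : (0 < n - i)%N by move: hn hi; clear; lia.
  have -> : (n.-1 - i = (n - i).-1)%N by move: hn hi; clear; lia.
  rewrite hG (residue charK0 hKR he); last by move: hnN hn hi; clear; lia.
  congr (_ %:R); apply/eqP/eqP; move: hn hi; clear; lia.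
have -> : G`_n *+ n = G^`()`_n.-1 by rewrite coef_deriv prednK.
have hh := eqN_mul hA (eqN_refl N'.+1 G^`()); rewrite mul1r in hh.
rewrite -(hh n.-1); last by move: hnN hn; clear; lia.
rewrite (@comp_poly_big _ Q G (maxn (size Q) n)) ?leq_maxl //.
rewrite !mulr_suml coef_sum.
rewrite (eq_bigr (fun i : 'I_(maxn (size Q) n) => Q`_i * ((i : nat) == n.-1)%:R)).
  by apply: sum_pick; rewrite leq_max; apply/orP; right; move: hn; clear; lia.
by move=> i _; rewrite -!scalerAl coefZ hterm.
Qed.

Definition bellS (R : comPzRingType) (T : finType) (X : {set T}) (k : nat)
  (x : nat -> R) : R :=
  \sum_(P : {set {set T}} | partition P X && (#|P| == k))
     \prod_(B in P) x #|B|.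

Lemma cover_U1 (T : finType) (B : {set T}) (Q : {set {set T}}) :
  B \notin Q -> cover (B |: Q) = B :|: cover Q.
Proof. by move=> hB; rewrite /cover big_setU1. Qed.

Lemma rec_fwd (T : finType) (X : {set T}) a k (S : {set T}) Q :
  a \in X -> partition ((a |: S) |: Q) X -> #|(a |: S) |: Q| = k.+1 ->
  pblock ((a |: S) |: Q) a :\ a = S ->
  ((a |: S) |: Q) :\ pblock ((a |: S) |: Q) a = Q ->
  [&& S \subset X :\ a, partition Q (X :\ a :\: S) & #|Q| == k].
Proof.
move=> aX hP hc e1 e2.
set B := a |: S; set P := B |: Q.
case/and3P: hP => /eqP covP trivP s0P.
have BP : B \in P by rewrite setU11.
have pb : pblock P a = B by apply: def_pblock => //; rewrite setU11.
rewrite pb in e1 e2.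
have aS : a \notin S by rewrite -e1 setD11.
have BQ : B \notin Q by rewrite -e2 setD11.
have QP : Q \subset P by apply/subsetP => C CQ; rewrite setU1r.
have cQ : cover P = B :|: cover Q by rewrite cover_U1.
apply/and3P; split.
- rewrite subsetD1 aS andbT -covP; apply/subsetP => y yS; apply/bigcupP.
  by exists B => //; rewrite !inE yS orbT.
- apply/and3P; split.
  + apply/eqP/setP => y; rewrite setDDl !inE.
    apply/idP/idP.
    * move=> yQ; have yX : y \in X by rewrite -covP cQ inE yQ orbT.
      rewrite yX andbT; apply/negP => yB.
      case/bigcupP: yQ => C CQ yC.
      have CP : C \in P by rewrite setU1r.
      have CB : C != B by apply: contraNneq BQ => <-.
      have := trivIsetP trivP C B CP BP CB.
      by move/disjointFr => /(_ y yC); rewrite !inE yB.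
    * case/andP => yB yX; move: yX; rewrite -covP cQ !inE.
      by rewrite (negbTE yB).
  + exact: trivIsetS QP trivP.
  + by apply: contra s0P => h; apply: (subsetP QP).
- by move: hc; rewrite cardsU1 BQ add1n => -[->].
Qed.

Lemma rec_bwd (T : finType) (X : {set T}) a (S : {set T}) Q :
  a \in X -> S \subset X :\ a -> partition Q (X :\ a :\: S) ->
  [/\ partition ((a |: S) |: Q) X, #|(a |: S) |: Q| = #|Q|.+1,
      a |: S \notin Q, a \notin S &
      pblock ((a |: S) |: Q) a = a |: S].
Proof.
move=> aX; rewrite subsetD1 => /andP [SX aS] /and3P [/eqP covQ trivQ s0Q].
set B := a |: S.
have BQ : B \notin Q.
  case: (boolP (B \in Q)) => // BQ; exfalso.
  have : a \in cover Q by apply/bigcupP; exists B; [exact: BQ | exact: setU11].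
  by rewrite covQ !inE eqxx andbF.
have disj : {in Q, forall C : {set T}, [disjoint B & C]}.
  move=> C CQ; rewrite -setI_eq0; apply/eqP/setP => y; rewrite !inE.
  apply/negP => /andP [yB yC].
  have : y \in cover Q by apply/bigcupP; exists C.
  by rewrite covQ !inE; case/orP: yB => [/eqP ->|->]; rewrite ?eqxx ?andbF.
have [trivP _] := trivIsetU1 disj trivQ s0Q.
have partP : partition (B |: Q) X.
  apply/and3P; split => //.
  - rewrite cover_U1 // covQ; apply/eqP/setP => y; rewrite !inE.
    case: (eqVneq y a) => [->|ya] /=; first by rewrite aX.
    case yS: (y \in S) => //=.
    by rewrite (subsetP SX).
  - rewrite !inE negb_or s0Q andbT; apply/negP => /eqP h.
    by have := setU11 a S; rewrite -/B -h inE.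
split => //.
- by rewrite cardsU1 BQ.
- by apply: def_pblock => //; rewrite ?setU11.
Qed.

Lemma bellS_rec (R : comPzRingType) (T : finType) (X : {set T}) a k
  (x : nat -> R) : a \in X ->
  bellS X k.+1 x = \sum_(S : {set T} | S \subset X :\ a)
                     x #|S|.+1 * bellS (X :\ a :\: S) k x.
Proof.
move=> aX; rewrite /bellS.
pose h (j : {set T} * {set {set T}}) := (a |: j.1) |: j.2.
pose h' (P : {set {set T}}) := (pblock P a :\ a, P :\ pblock P a).
rewrite (reindex_onto h h'); last first.
  move=> P /andP [/and3P [/eqP covP trivP s0P] _]; rewrite /h /h' /=.
  have aP : a \in cover P by rewrite covP.
  by rewrite setD1K ?mem_pblock // setD1K // pblock_mem.
rewrite (eq_bigl (fun j : {set T} * {set {set T}} => (j.1 \subset X :\ a) &&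
           (partition j.2 (X :\ a :\: j.1) && (#|j.2| == k)))); last first.
  move=> [S Q] /=; apply/idP/idP.
    case/andP => /andP [hP /eqP hc] /eqP.
    rewrite /h' /h /= => -[e1 e2]; exact: rec_fwd aX hP hc e1 e2.
  case/and3P => SX hQ /eqP hc.
  have [hP hc' BQ aS pb] := rec_bwd aX SX hQ.
  rewrite /h /h' /= hP hc' hc eqxx /= pb setU1K // setU1K //.
rewrite -(pair_big_dep (fun S : {set T} => S \subset X :\ a)
   (fun (S : {set T}) (Q : {set {set T}}) => partition Q (X :\ a :\: S) && (#|Q| == k))
   (fun S Q => \prod_(B in h (S, Q)) x #|B|)) /=.
apply: eq_bigr => S SX; rewrite mulr_sumr; apply: eq_bigr => Q /andP [hQ _].
have [_ _ BQ aS _] := rec_bwd aX SX hQ.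
by rewrite /h /= big_setU1 //= cardsU1 aS.
Qed.

Lemma bellS_0 (R : comPzRingType) (T : finType) (X : {set T}) (x : nat -> R) :
  bellS X 0 x = (X == set0)%:R.
Proof.
rewrite /bellS (eq_bigl (fun P => (P == set0) && (X == set0))); last first.
  move=> P; apply/idP/idP.
    case/andP => /and3P [/eqP covP _ _] /eqP /cards0_eq P0.
    by rewrite P0 eqxx -covP P0 /cover big_set0 /=.
  by case/andP => /eqP -> /eqP ->; rewrite cards0 eqxx andbT partition_set0.
case: eqP => _; last by rewrite big1 // => P /andP [].
by rewrite (big_pred1 set0) ?big_set0 // => P; rewrite andbT.
Qed.

Lemma bellS_set0 (R : comPzRingType) (T : finType) k (x : nat -> R) :
  bellS (set0 : {set T}) k.+1 x = 0.
Proof.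
rewrite /bellS big_pred0 // => P; apply/negP => /andP [/and3P [/eqP covP _ s0P] /eqP hc].
have : P != set0 by rewrite -card_gt0 hc.
case/set0Pn => B BP.
have BX : B \subset cover P by apply/subsetP => y yB; apply/bigcupP; exists B.
move: BX; rewrite covP subset0 => /eqP B0.
by move: s0P; rewrite -B0 BP.
Qed.

Lemma sum_subsets_card (R : comPzRingType) (T : finType) (Y : {set T})
  (F : nat -> R) :
  \sum_(S : {set T} | S \subset Y) F #|S| =
  \sum_(i < #|Y|.+1) F i *+ 'C(#|Y|, i).
Proof.
transitivity (\sum_(S : {set T} | S \subset Y)
                \sum_(i < #|Y|.+1) (if #|S| == i then F i else 0)).
  apply: eq_bigr => S SY.
  have hS : (#|S| < #|Y|.+1)%N by rewrite ltnS subset_leq_card.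
  rewrite (bigD1 (Ordinal hS)) //= eqxx big1 ?addr0 // => i hi.
  case: eqP => // e; case/eqP: hi; apply: val_inj => /=; by rewrite e.
rewrite exchange_big; apply: eq_bigr => i _.
rewrite -big_mkcondr /= sumr_const -cards_draws; congr (_ *+ _).
by apply: eq_card => S; rewrite inE.
Qed.

Lemma bellS_eq (R : comPzRingType) (T : finType) (x : nat -> R)
  (c : nat -> nat -> R) :
  c 0%N 0%N = 1 -> (forall k, c 0%N k.+1 = 0) -> (forall m, c m.+1 0%N = 0) ->
  (forall m k, c m.+1 k.+1 = \sum_(i < m.+1) (x i.+1 * c (m - i)%N k) *+ 'C(m, i)) ->
  forall (X : {set T}) k, bellS X k x = c #|X| k.
Proof.
move=> c00 c0k cm0 crec X k.
have [N hN] := ubnP #|X|; elim: N X k hN => [//|N IH] X k hN.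
case: (eqVneq X set0) => [->|/set0Pn [a aX]].
  rewrite cards0; case: k => [|k]; last by rewrite bellS_set0 c0k.
  by rewrite bellS_0 eqxx c00.
have hX : #|X| = #|X :\ a|.+1 by rewrite (cardsD1 a X) aX.
case: k => [|k].
  rewrite bellS_0 hX cm0; case: eqP => // X0; by move: aX; rewrite X0 inE.
rewrite (bellS_rec _ _ aX) hX crec.
transitivity (\sum_(S : {set T} | S \subset X :\ a)
                 (fun i => x i.+1 * c (#|X :\ a| - i)%N k) #|S|).
  apply: eq_bigr => S SX /=; rewrite IH.
    by rewrite cardsD (setIidPr SX).
  rewrite cardsD (setIidPr SX); apply: leq_ltn_trans (leq_subr _ _) _.
  by rewrite -ltnS -hX.
by rewrite (sum_subsets_card (X :\ a) (fun i => x i.+1 * c (#|X :\ a| - i)%N k)).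
Qed.

Definition ybar (K : fieldType) (A : comAlgType K) (x : nat -> A) j : A :=
  if j == 0%N then 0 else ((j`!)%:R : K)^-1 *: x j.
Definition YN (K : fieldType) (A : comAlgType K) (x : nat -> A) M : {poly A} :=
  \poly_(j < M) ybar x j.
Definition cB (K : fieldType) (A : comAlgType K) (x : nat -> A) m k : A :=
  ((k`!)%:R : K)^-1 *: ((YN x m.+1 ^+ k)`_m *+ m`!).

Lemma natK_neq0 (K : fieldType) (charK0 : [pchar K] =i pred0) n :
  (0 < n)%N -> (n%:R : K) != 0.
Proof. by move=> hn; rewrite ((pcharf0P K).1 charK0 n) -lt0n. Qed.

Lemma x_ybar (K : fieldType) (charK0 : [pchar K] =i pred0) (A : comAlgType K)
  (x : nat -> A) j : x j.+1 = ybar x j.+1 *+ (j.+1)`!.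
Proof.
rewrite /ybar /= -scaler_nat scalerA mulfV ?scale1r //.
exact: natK_neq0 (fact_gt0 _).
Qed.

Lemma YN0 (K : fieldType) (A : comAlgType K) (x : nat -> A) M : (YN x M)`_0 = 0.
Proof. by rewrite coef_poly; case: M. Qed.

Lemma YN_indep (K : fieldType) (A : comAlgType K) (x : nat -> A) M M' k m :
  (m < M)%N -> (m < M')%N -> (YN x M ^+ k)`_m = (YN x M' ^+ k)`_m.
Proof.
move=> h1 h2; have h : eqN m.+1 (YN x M) (YN x M').
  by move=> i hi; rewrite !coef_poly (leq_trans hi h1) (leq_trans hi h2).
by rewrite (eqN_exp k h).
Qed.

Lemma scale_cancel (K : fieldType) (A : comAlgType K) (c : K) (a b : A) :
  c != 0 -> c *: a = c *: b -> a = b.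
Proof.
move=> hc h; by rewrite -[a]scale1r -(mulVf hc) -scalerA h scalerA mulVf // scale1r.
Qed.

Lemma bell_ps (K : fieldType) (charK0 : [pchar K] =i pred0) (A : comAlgType K)
  (T : finType) (x : nat -> A) (X : {set T}) k :
  bellS X k x = cB x #|X| k.
Proof.
apply: bellS_eq.
- by rewrite /cB expr0 coef1 /= invr1 scale1r.
- move=> k'; rewrite /cB coef_exp_low ?YN0 // mul0rn scaler0 //.
- by move=> m; rewrite /cB expr0 coef1 /= mul0rn scaler0.
move=> m k'.
have hf := natK_neq0 charK0 (fact_gt0 k'.+1).
apply: (scale_cancel hf).
rewrite /cB scalerA mulfV // scale1r scaler_sumr.
set Y := YN x m.+2.
have eL : (Y ^+ k'.+1)`_m.+1 *+ m.+1 =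
          \sum_(i < m.+1) (ybar x i.+1 * (Y ^+ k')`_(m - i)) *+ (i.+1 * k'.+1).
  rewrite -coef_deriv deriv_exp /= coefMn coefM -sumrMnl; apply: eq_bigr => i _.
  rewrite coef_deriv /Y coef_poly ltnS (leq_trans (ltn_ord i)) // mulrnAl -mulrnA.
  by rewrite mulnC.
rewrite factS mulrnA eL -sumrMnl.
apply: eq_bigr => i _.
rewrite (x_ybar charK0 x i).
rewrite (@YN_indep _ _ x (m - i).+1 m.+2 k' (m - i) (ltnSn (m - i))); last first.
  by rewrite ltnS (leq_trans (leq_subr _ _)).
rewrite -/Y; move: (ybar x i.+1) ((Y ^+ k')`_(m - i)) => yb cc.
rewrite -!scaler_nat -scalerAl -!scalerAr !scalerA.
congr (_ *: _).
have hnat : ((i.+1)`! * ((m - i)`! * 'C(m, i)) = i.+1 * m`!)%N.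
  rewrite factS -mulnA; congr (_ * _)%N.
  by rewrite mulnA mulnC bin_fact // -ltnS.
have hk := natK_neq0 charK0 (fact_gt0 k').
transitivity ((k'.+1)%:R * ((i.+1)`!%:R * ((m - i)`!%:R * 'C(m, i)%:R))
   * ((k'`!)%:R * (k'`!)%:R^-1) : K); last by rewrite (factS k') natrM; ring.
rewrite mulfV // mulr1 -!natrM hnat; congr (_%:R); lia.
Qed.

Definition tr (R : comNzRingType) M (f : nat -> R) : {poly R} := \poly_(i < M) f i.

Lemma ps_mul_coef (R : comNzRingType) (f g : nat -> R) M m :
  (m < M)%N -> ps_mul f g m = (tr M f * tr M g)`_m.
Proof.
move=> hm; rewrite coefM /ps_mul; apply: eq_bigr => i _.
rewrite !coef_poly (leq_ltn_trans _ hm) ?(leq_ltn_trans _ hm) //.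
  exact: leq_subr.
by rewrite -ltnS.
Qed.

Lemma ps_pow_eqN (R : comNzRingType) (f : nat -> R) n M :
  eqN M (tr M (ps_pow f n)) (tr M f ^+ n).
Proof.
elim: n => [|n IH] i hi; rewrite coef_poly hi /=.
  by rewrite expr0 coef1 /ps_one.
rewrite (ps_mul_coef _ _ hi) exprS.
exact: (eqN_mul (eqN_refl M (tr M f)) IH).
Qed.

Lemma ps_inv_seq_size (R : comPzRingType) (f : nat -> R) m :
  size (ps_inv_seq f m) = m.+1.
Proof. by elim: m => [//|m IH] /=; rewrite size_rcons IH. Qed.

Lemma ps_inv_seq_nth (R : comPzRingType) (f : nat -> R) m i :
  (i <= m)%N -> nth 0 (ps_inv_seq f m) i = ps_inv f i.
Proof.
elim: m => [|m IH] hi; first by move: hi; rewrite leqn0 => /eqP ->.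
rewrite /= nth_rcons ps_inv_seq_size.
case: ltnP => h; first exact: IH.
have -> : i = m.+1 by apply/eqP; rewrite eqn_leq hi h.
by rewrite eqxx /ps_inv /= nth_rcons ps_inv_seq_size ltnn eqxx.
Qed.

Lemma ps_inv_rec (R : comPzRingType) (f : nat -> R) m :
  ps_inv f m.+1 = - \sum_(i < m.+1) f i.+1 * ps_inv f (m - i).
Proof.
rewrite /ps_inv /= nth_rcons ps_inv_seq_size ltnn eqxx; congr (- _).
rewrite big_add1 /= big_mkord; apply: eq_bigr => i _.
by rewrite ps_inv_seq_nth // subSS leq_subr.
Qed.

Lemma ps_inv_prop (R : comPzRingType) (f : nat -> R) m :
  f 0%N = 1 -> ps_mul f (ps_inv f) m = (m == 0%N)%:R.
Proof.
move=> f0; case: m => [|m].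
  by rewrite /ps_mul big_ord1 f0 mul1r /ps_inv.
rewrite /ps_mul big_ord_recl /= f0 mul1r subn0 ps_inv_rec.
by rewrite addNr.
Qed.

Lemma ps_inv_eqN (R : comNzRingType) (f : nat -> R) M :
  f 0%N = 1 -> eqN M (tr M f * tr M (ps_inv f)) 1.
Proof.
move=> f0 i hi; rewrite -ps_mul_coef // ps_inv_prop // coef1 //.
Qed.

Lemma ps_mul_ext (R : comPzRingType) (f f' g g' : nat -> R) :
  f =1 f' -> g =1 g' -> ps_mul f g =1 ps_mul f' g'.
Proof. by move=> h1 h2 m; apply: eq_bigr => i _; rewrite h1 h2. Qed.

Lemma ps_pow_ext (R : comPzRingType) (f f' : nat -> R) n :
  f =1 f' -> ps_pow f n =1 ps_pow f' n.
Proof. by move=> h; elim: n => [//|n IH] /=; apply: ps_mul_ext. Qed.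

Lemma ps_inv_ext (R : comPzRingType) (f f' : nat -> R) :
  f =1 f' -> ps_inv f =1 ps_inv f'.
Proof.
move=> h m; rewrite /ps_inv; congr (nth _ _ _).
elim: m => [//|m IH] /=; rewrite IH; congr (rcons _ (- _)).
by apply: eq_bigr => i _; rewrite h.
Qed.

Lemma bell_cB (K : fieldType) (charK0 : [pchar K] =i pred0) (A : comAlgType K)
  (x : nat -> A) j k : bell j k x = cB x j k.
Proof.
have := bell_ps charK0 x [set: 'I_j] k; rewrite cardsT card_ord; exact.
Qed.

Lemma cB_inv (K : fieldType) (charK0 : [pchar K] =i pred0) (A : comAlgType K)
  (x : nat -> A) m k :
  (YN x m.+1 ^+ k)`_m = ((m`!)%:R : K)^-1 *: ((k`!)%:R *: cB x m k).
Proof.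
rewrite /cB -scaler_nat !scalerA mulfK ?natK_neq0 ?fact_gt0 //.
by rewrite mulVf ?natK_neq0 ?fact_gt0 // scale1r.
Qed.

Lemma coef_Gk (K : fieldType) (charK0 : [pchar K] =i pred0) (A : comAlgType K)
  (x : nat -> A) M j k : (j < M)%N ->
  (YN x M ^+ k)`_j = ((j`!)%:R : K)^-1 *: ((k`!)%:R *: bell j k x).
Proof.
move=> hj; rewrite (@YN_indep _ _ x M j.+1 k j hj (ltnSn j)) cB_inv //.
by rewrite (bell_cB charK0).
Qed.

Lemma S_bell (K : fieldType) (A : comAlgType K) (S : {rmorphism A -> A})
  (x : nat -> A) j k : S (bell j k x) = bell j k (fun i => S (x i)).
Proof.
rewrite /bell rmorph_sum; apply: eq_bigr => P _; by rewrite rmorph_prod.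
Qed.

Lemma sum_trunc (R : comNzRingType) M j (F : nat -> R) :
  (j <= M)%N -> (forall i, (j <= i)%N -> (i < M)%N -> F i = 0) ->
  \sum_(i < M) F i = \sum_(i < j) F i.
Proof.
move=> hjM hF; rewrite (big_ord_widen M F hjM).
rewrite [LHS](bigID (fun i : 'I_M => (i < j)%N)) /= [X in _ + X]big1 ?addr0 //.
by move=> i; rewrite -leqNgt => hi; apply: hF.
Qed.

Lemma coef_GPG (K : fieldType) (charK0 : [pchar K] =i pred0)
  (A : comAlgType K) (x t : nat -> A) M j : (j < M)%N ->
  (YN x M * (tr M (fun m => ((m`!)%:R : K)^-1 *: t m.+1) \Po YN x M))`_j =
  ((j`!)%:R : K)^-1 *: \sum_(1 <= k < j.+1) bell j k x * (k%:R * t k).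
Proof.
move=> hj.
rewrite (comp_poly_big _ (size_poly M _)) mulr_sumr coef_sum.
rewrite big_add1 /= big_mkord scaler_sumr.
rewrite (@sum_trunc _ M j (fun i => (YN x M * ((\poly_(i0 < M) (((i0`!)%:R : K)^-1 *: t i0.+1))`_i *: YN x M ^+ i))`_j)); last 2 first.
- exact: ltnW.
- move=> i hi hiM; rewrite -scalerAr -exprS coefZ coef_exp_low ?mulr0 //.
  exact: YN0.
apply: eq_bigr => i _.
have hiM : (i < M)%N by apply: ltn_trans hj.
rewrite -scalerAr -exprS coefZ (coef_Gk charK0 _ _ hj) coef_poly hiM.
move: (t i.+1) (bell j i.+1 x) => tt bb.
rewrite mulr_natl -scaler_nat -scalerAl -!scalerAr !scalerA [bb * tt]mulrC.
congr (_ *: _).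
have hi0 := natK_neq0 charK0 (fact_gt0 i).
rewrite (factS i) natrM.
transitivity (((j`!)%:R : K)^-1 * (i.+1)%:R * ((i`!)%:R * (i`!)%:R^-1)); first by ring.
by rewrite mulfV // mulr1.
Qed.

Definition wB (R : comNzRingType) M n : {poly R} :=
  \poly_(k < M) ((-1) ^+ k * ('C(n + k - 1, k))%:R).

Lemma wB_step (R : comNzRingType) M n :
  eqN M (wB R M n.+1 * (1 + 'X)) (wB R M n).
Proof.
move=> i hi; rewrite mulrDr mulr1 coefD coefMX !coef_poly hi.
case: i hi => [|k] hi /=.
  by rewrite addr0 !expr0 !mul1r !bin0.
rewrite (ltnW hi).
have -> : (n.+1 + k.+1 - 1 = (n + k).+1)%N by lia.
have -> : (n.+1 + k - 1 = n + k)%N by lia.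
have -> : (n + k.+1 - 1 = n + k)%N by lia.
by rewrite binS natrD exprS mulN1r !mulNr mulrDr opprD -addrA addNr addr0.
Qed.

Lemma wB_0 (R : comNzRingType) M : eqN M (wB R M 0) 1.
Proof.
move=> i hi; rewrite coef_poly hi coef1; case: i hi => [|k] hi /=.
  by rewrite expr0 mul1r bin0.
by rewrite add0n subn1 /= bin_small // mulr0.
Qed.

Lemma wB_inv (R : comNzRingType) M n : eqN M (wB R M n * (1 + 'X) ^+ n) 1.
Proof.
elim: n => [|n IH]; first by rewrite expr0 mulr1; exact: wB_0.
rewrite exprS mulrA.
apply: eqN_trans _ IH.
exact: eqN_mul (wB_step _ _) (eqN_refl _ _).
Qed.

Lemma wB_comp (R : comNzRingType) M n (T : {poly R}) : T`_0 = 0 ->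
  eqN M ((wB R M n \Po T) * (1 + T) ^+ n) 1.
Proof.
move=> h0; have := eqN_comp h0 (@wB_inv R M n).
have c1 : (1 : {poly R}) \Po T = 1 by rewrite -polyC1 comp_polyC.
by rewrite comp_polyM comp_polyXn comp_polyD comp_polyX c1.
Qed.

Lemma bell_ext (R : comPzRingType) j k (x y : nat -> R) :
  x =1 y -> bell j k x = bell j k y.
Proof. by move=> h; apply: eq_bigr => P _; apply: eq_bigr => B _; rewrite h. Qed.

Lemma eq2_part (K : fieldType) (charK0 : [pchar K] =i pred0)
  (A : comAlgType K) (t : nat -> A) (t1 : t 1%N = 1)
  (S : {rmorphism A -> A})
  (hS : forall n : nat, (2 <= n)%N ->
     (n%:R : K)^-1 *:
       \sum_(1 <= k < n.+1)
          S (bell n k (fun j => j%:R * t j)) * (k%:R * t k) = 0) n :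
  (2 <= n)%N ->
  n%:R * S (t n) =
          egf_coef n.-1
            (ps_pow (ps_inv (fun j => if j == 0%N then 1
                                      else ((j`!)%:R : K)^-1 *: t j.+1)) n).
Proof.
move=> hn.
have hn0 : (0 < n)%N by apply: leq_trans hn.
set M := n.+1.
pose s j := j%:R * S (t j).
set fser := fun j => if j == 0%N then 1 else ((j`!)%:R : K)^-1 *: t j.+1.
pose h := fun m => ((m`!)%:R : K)^-1 *: t m.+1.
have hfs : fser =1 h by case => [|m] //; rewrite /h /fser /= invr1 scale1r t1.
set Qinv := ps_inv fser.
pose G := YN s M; pose P := tr M h.
have hS' : forall j, (2 <= j)%N ->
    \sum_(1 <= k < j.+1) bell j k s * (k%:R * t k) = 0.
  move=> j hj; have := hS j hj.
  rewrite -[X in _ = X](scaler0 _ ((j%:R : K)^-1)) => /scale_cancel.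
  move/(_ (invr_neq0 (natK_neq0 charK0 (leq_trans _ hj)))) => /(_ isT) hz.
  rewrite -[RHS]hz.
  apply: eq_bigr => k _; rewrite S_bell; congr (_ * _); apply: bell_ext => i.
  by rewrite /s rmorphM rmorph_nat.
have s1 : s 1%N = 1 by rewrite /s t1 rmorph1 mul1r.
have hGP : eqN M (G * (P \Po G)) 'X.
  move=> j hj; rewrite (coef_GPG charK0 s t hj) coefX.
  case: j hj => [|[|j]] hj.
  - by rewrite big_geq // scaler0.
  - rewrite big_nat1 (bell_cB charK0) /cB /= expr1 coef_poly /= /ybar /=.
    by rewrite !invr1 !scale1r s1 mul1r t1 mulr1.
  - by rewrite hS' // scaler0.
have hP : eqN M (tr M fser) P by move=> i hi; rewrite !coef_poly hi hfs.
have hQ : eqN M (tr M (ps_pow Qinv n) * P ^+ n) 1.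
  have e1 := @ps_pow_eqN _ Qinv n M.
  have e2 := eqN_exp n (eqN_sym hP).
  have e3 := eqN_mul e1 e2.
  apply: eqN_trans e3 _; rewrite -exprMn mulrC.
  have := eqN_exp n (@ps_inv_eqN _ fser M (erefl _)); rewrite expr1n; apply.
have L := lagrange_inv charK0 (YN0 s M) hn0 (ltnSn n) hGP hQ.
have hn1 : (n.-1 < n.+1)%N by lia.
move: L; rewrite /G coef_poly /M ltnSn /ybar (gtn_eqF hn0) /tr coef_poly hn1 => L.
transitivity (((n.-1)`!)%:R * ps_pow Qinv n n.-1); last by [].
rewrite -L; change (n%:R * S (t n)) with (s n).
move: (s n) => sn.
rewrite mulr_natl -!scaler_nat !scalerA.
have -> : ((n.-1)`!%:R * n%:R * (n`!%:R)^-1 : K) = 1.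
  have hf : (n`! = n * (n.-1)`!)%N by case: (n) hn0 => [//|m _]; rewrite factS.
  rewrite hf natrM mulrC [(_ * n%:R)]mulrC mulVf // -natrM -hf.
  exact: natK_neq0 (fact_gt0 _).
by rewrite scale1r.
Qed.

Lemma eq3_fun (K : fieldType) (charK0 : [pchar K] =i pred0)
  (A : comAlgType K) (t : nat -> A) :
  (fun m => let j := m.+1 in
            if j == 1%N then 1
            else (((j`!)%:R : K)^-1 *: (j%:R * t j))) =1
  (fun j => if j == 0%N then 1 else ((j`!)%:R : K)^-1 *: t j.+1).
Proof.
case => [//|m] /=.
rewrite mulr_natl -scaler_nat scalerA (factS m.+1) natrM invfM mulrAC mulVf.
  by rewrite mul1r.
exact: natK_neq0.
Qed.

Lemma eq1_part (K : fieldType) (charK0 : [pchar K] =i pred0)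
  (A : comAlgType K) (t : nat -> A) (t1 : t 1%N = 1) n :
  (2 <= n)%N ->
  \sum_(1 <= k < n)
     (-1) ^+ k * ((n + k - 1) ^_ k)%:R * bell n.-1 k (fun j => t j.+1) =
  egf_coef n.-1
     (ps_pow (ps_inv (fun j => if j == 0%N then 1
                               else ((j`!)%:R : K)^-1 *: t j.+1)) n).
Proof.
move=> hn.
set M := n.+1.
set fser := fun j => if j == 0%N then 1 else ((j`!)%:R : K)^-1 *: t j.+1.
set Qinv := ps_inv fser.
pose u j := t j.+1.
pose T := YN u M.
have hP : eqN M (tr M fser) (1 + T).
  move=> i hi; rewrite !coef_poly hi coefD coef1 coef_poly hi /ybar /fser.
  by case: i hi => [|i] hi //=; rewrite ?addr0 ?add0r.
have hQ : eqN M (tr M (ps_pow Qinv n) * (1 + T) ^+ n) 1.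
  have e1 := @ps_pow_eqN _ Qinv n M.
  have e2 := eqN_exp n hP.
  have e3 := eqN_mul e1 (eqN_sym e2).
  apply: eqN_trans e3 _; rewrite -exprMn mulrC.
  have := eqN_exp n (@ps_inv_eqN _ fser M (erefl _)); rewrite expr1n; apply.
have hW := @wB_comp A M n T (YN0 u M).
set W := wB A M n \Po T.
have hQW : eqN M (tr M (ps_pow Qinv n)) W.
  have e1 := eqN_mul (eqN_refl M (tr M (ps_pow Qinv n))) (eqN_sym hW).
  rewrite mulr1 in e1; apply: eqN_trans e1 _.
  rewrite mulrCA mulrC.
  have := eqN_mul (eqN_refl M W) hQ; rewrite mulr1 [in X in _ -> X]mulrC; exact.
have hn1 : (n.-1 < M)%N by rewrite /M; lia.
transitivity ((n.-1)`!%:R * W`_n.-1); last first.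
  by rewrite /egf_coef -(hQW _ hn1) /tr coef_poly hn1.
rewrite /W (comp_poly_big _ (size_poly M _)) coef_sum mulr_sumr.
rewrite (@sum_trunc _ M n (fun i => (n.-1)`!%:R * ((\poly_(i0 < M) ((-1) ^+ i0 * 'C(n + i0 - 1, i0)%:R))`_i *: T ^+ i)`_n.-1)); last 2 first.
- exact: leqnSn.
- move=> i hi hiM; rewrite coefZ coef_exp_low ?mulr0 //; first exact: YN0.
  by move: hi hn; clear; lia.
have [n' En] : exists n', n = n'.+1 by exists n.-1; rewrite prednK //; clear -hn; lia.
subst n => /=.
rewrite big_ord_recl /= expr0 alg_polyC coefC.
have -> : (n' == 0%N) = false by move: hn; clear; lia.
rewrite mulr0 add0r big_add1 /= big_mkord; apply: eq_bigr => k _.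
rewrite coefZ coef_poly (_ : (k.+1 < M)%N); last by move: (ltn_ord k); rewrite /M; clear; lia.
rewrite (@coef_Gk _ charK0 _ u M n' k.+1 hn1).
have -> : (n'.+1 + k.+1 - 1 = n' + k.+1)%N by clear; lia.
rewrite -bin_ffact.
move: ((-1) ^+ k.+1) (bell n' k.+1 (fun j => t j.+1)) => sg bb.
rewrite (_ : bump 0 k = k.+1) // -!scalerAr mulrAC [sg * _ * bb]mulrAC.
rewrite !mulr_natr mulr_natl -!scaler_nat !scalerA.
congr (_ *: _).
have hf := natK_neq0 charK0 (fact_gt0 n').
rewrite natrM.
set F := ((k.+1)`!)%:R; set C := ('C(_, _))%:R; set e := (n'`!)%:R.
transitivity ((e^-1 * e) * (C * F)); last by ring.
by rewrite mulVf // mul1r.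
Qed.

Unset Implicit Arguments.

Theorem mainTheorem6
  (K : fieldType) (charK0 : [pchar K] =i pred0)
  (A : comAlgType K) (t : nat -> A) (t1 : t 1%N = 1)
  (S : {rmorphism A -> A})
  (hS : forall n : nat, (2 <= n)%N ->
     (n%:R : K)^-1 *:
       \sum_(1 <= k < n.+1)
          S (bell n k (fun j => j%:R * t j)) * (k%:R * t k) = 0) :
  forall n : nat, (2 <= n)%N ->
    [/\ n%:R * S (t n) =
          \sum_(1 <= k < n)
             (-1) ^+ k * ((n + k - 1) ^_ k)%:R * bell n.-1 k (fun j => t j.+1),
        n%:R * S (t n) =
          egf_coef n.-1
            (ps_pow (ps_inv (fun j => if j == 0%N then 1
                                      else ((j`!)%:R : K)^-1 *: t j.+1)) n)
      & n%:R * S (t n) =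
          egf_coef n.-1
            (ps_pow (ps_inv (fun m =>
               let j := m.+1 in
               if j == 1%N then 1
               else (((j`!)%:R : K)^-1 *: (j%:R * t j)))) n)].
Proof.
move=> n hn.
have E2 := eq2_part charK0 t1 hS hn.
split => //.
- by rewrite E2 (eq1_part charK0 t1 hn).
- rewrite E2 /egf_coef; congr (_ * _).
  apply: ps_pow_ext => m; apply: ps_inv_ext => i.
  by symmetry; exact: (eq3_fun charK0 t i).
Qed.
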